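(* Let $x_1,x_2,y_1,y_2\in\mathbb{R}$, $d>0$, $\eta>0$, $\sigma^2>0$, $R>0$, $\tilde\epsilon=\frac{\sigma^2}{\eta}(e^R-1)$ and $\tilde\tau_m=\tilde\epsilon(y_m^2+d^2)$. Consider $$\min_{P_1,P_2,x\in\mathbb{R}}\ P_1+P_2\quad\text{s.t.}\quad -P_2+\frac{\tilde\epsilon\eta}{\sigma^2}P_1+\tilde\epsilon(x-x_2)^2+\tilde\tau_2\le0,\qquad -P_1+\tilde\epsilon(x-x_1)^2+\tilde\tau_1\le0.$$ Its optimal solution is $$x^*=\frac{x_2}{e^R+1}+\frac{e^Rx_1}{e^R+1},\quad P_1^*=\tilde\epsilon(x^*-x_1)^2+\tilde\tau_1,\quad P_2^*=\frac{\tilde\epsilon\eta}{\sigma^2}P_1^*+\tilde\epsilon(x^*-x_2)^2+\tilde\tau_2.$$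
   Context: This is a relaxed total-power-minimization problem for two-user NOMA with a pinching antenna at $(x,0,d)$, where user 1 performs successive interference cancellation; the constraints encode that user 2's rate and user 1's own rate are at least $R$. *)

(* Defs.v *)
From Stdlib Require Import Reals.
Open Scope R_scope.

Definition eps_t (sigma2 eta Rt : R) : R := sigma2 / eta * (exp Rt - 1).

Definition tau_t (sigma2 eta Rt y d : R) : R := eps_t sigma2 eta Rt * (y ^ 2 + d ^ 2).

Definition feasible (x1 x2 y1 y2 d eta sigma2 Rt : R) (P1 P2 x : R) : Prop :=
  let e := eps_t sigma2 eta Rt in
  - P2 + e * eta / sigma2 * P1 + e * (x - x2) ^ 2 + tau_t sigma2 eta Rt y2 d <= 0 /\
  - P1 + e * (x - x1) ^ 2 + tau_t sigma2 eta Rt y1 d <= 0.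

Definition optimal (x1 x2 y1 y2 d eta sigma2 Rt : R) (P1 P2 x : R) : Prop :=
  feasible x1 x2 y1 y2 d eta sigma2 Rt P1 P2 x /\
  forall Q1 Q2 z, feasible x1 x2 y1 y2 d eta sigma2 Rt Q1 Q2 z -> P1 + P2 <= Q1 + Q2.

(* Main.v *)
Require Import Defs.
From Stdlib Require Import Reals Lra Psatz.
Open Scope R_scope.

Theorem lemma5 (x1 x2 y1 y2 d eta sigma2 Rt : R) :
  0 < d -> 0 < eta -> 0 < sigma2 -> 0 < Rt ->
  let e := eps_t sigma2 eta Rt in
  let xs := x2 / (exp Rt + 1) + exp Rt * x1 / (exp Rt + 1) in
  let P1s := e * (xs - x1) ^ 2 + tau_t sigma2 eta Rt y1 d in
  let P2s := e * eta / sigma2 * P1s + e * (xs - x2) ^ 2 + tau_t sigma2 eta Rt y2 d in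
  optimal x1 x2 y1 y2 d eta sigma2 Rt P1s P2s xs /\
  (forall P1 P2 x, optimal x1 x2 y1 y2 d eta sigma2 Rt P1 P2 x ->
     P1 = P1s /\ P2 = P2s /\ x = xs).
Proof.
  intros hd heta hs hR e xs P1s P2s.
  assert (HE : 1 < exp Rt) by (rewrite <- exp_0; apply exp_increasing; lra).
  assert (He : 0 < e).
  { unfold e, eps_t. apply Rmult_lt_0_compat; [apply Rdiv_lt_0_compat|]; lra. }
  assert (Hk : e * eta / sigma2 = exp Rt - 1).
  { unfold e, eps_t. field. lra. }
  assert (Hxs : (exp Rt + 1) * xs = x2 + exp Rt * x1).
  { unfold xs. field. lra. }
  unfold optimal, feasible in *. fold e. rewrite Hk in *.
  unfold P2s, P1s in *. rewrite Hk in *.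
  clearbody xs e.
  set (T1 := tau_t sigma2 eta Rt y1 d) in *.
  set (T2 := tau_t sigma2 eta Rt y2 d) in *.
  set (E := exp Rt) in *.
  clearbody T1 T2 E.
  assert (Hid : forall z, E*(z-x1)^2+(z-x2)^2 = E*(xs-x1)^2+(xs-x2)^2+(E+1)*(z-xs)^2).
  { intro z. replace x2 with ((E+1)*xs - E*x1) by lra. ring. }
  assert (Hlb : forall Q1 Q2 z,
    - Q2 + (E - 1) * Q1 + e * (z - x2) ^ 2 + T2 <= 0 ->
    - Q1 + e * (z - x1) ^ 2 + T1 <= 0 ->
    Q1 + Q2 >= (e * (xs - x1) ^ 2 + T1) +
      ((E - 1) * (e * (xs - x1) ^ 2 + T1) + e * (xs - x2) ^ 2 + T2)
      + e*(E+1)*(z-xs)^2).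
  { intros Q1 Q2 z c2 c1.
    assert (E * Q1 >= E * (e * (z - x1) ^ 2 + T1)).
    { apply Rle_ge, Rmult_le_compat_l; lra. }
    assert (e*(E*(z-x1)^2+(z-x2)^2) = e*(E*(xs-x1)^2+(xs-x2)^2+(E+1)*(z-xs)^2)) by (rewrite Hid; reflexivity).
    nra. }
  split.
  - split; [split; lra|].
    intros Q1 Q2 z [c2 c1].
    pose proof (Hlb Q1 Q2 z c2 c1).
    assert (0 <= e*(E+1)*(z-xs)^2).
    { apply Rmult_le_pos; [nra| apply pow2_ge_0]. }
    lra.
  - intros P1 P2 x [[c2 c1] Hopt].
    assert (Hle : P1 + P2 <= (e * (xs - x1) ^ 2 + T1) + ((E - 1) * (e * (xs - x1) ^ 2 + T1) + e * (xs - x2) ^ 2 + T2)) by (apply (Hopt _ _ xs); split; lra).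
    pose proof (Hlb P1 P2 x c2 c1).
    assert (Hx : (x - xs)^2 = 0).
    { assert (0 <= (x-xs)^2) by apply pow2_ge_0.
      assert (0 < e*(E+1)) by nra.
      destruct (Rle_lt_or_eq_dec 0 ((x-xs)^2) H0) as [Hp|Hp]; [|auto].
      assert (0 < e*(E+1)*(x-xs)^2) by (apply Rmult_lt_0_compat; auto). lra. }
    assert (x = xs).
    { assert (x - xs = 0) by (simpl in Hx; nra). lra. }
    subst x.
    split; [|split]; nra.
Qed.
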